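(* Let $H$ be a finite, connected, $d$-regular graph on $[n]$ and $\Phi(x,y)$ a standard symmetric polynomial of partial degree $d$. Then $G(\Phi)^*$ has some component isomorphic to $H$ if and only if $U(H,\Phi)\ne\emptyset$.
   Context: For a symmetric $\Phi(x,y)\in\mathbb{C}[x,y]$ of partial degree $d$ (degree $d$ in $y$), write $\Phi(x,y)=\sum_{i=0}^d a_i(x)y^i$. $G(\Phi)$ has vertex set $\mathbb{C}$, the neighbours of $u$ being the roots of $\Phi(u,y)$ with multiplicity (edges = points of $\mathbb{V}(\Phi)$). A component is singular if it has a loop ($\Phi(u,u)=0$), a multiple edge ($\Phi(u,y)$ has a multiple root) or a defective vertex ($a_d(u)=0$). $\Phi$ is standard if it is squarefree, $\Phi(x,x)\not\equiv 0$, and $\Phi$ has no nonconstant factor depending only on $x$ (or only on $y$); then only finitely many components are singular and $G(\Phi)^*$ is $G(\Phi)$ with these removed. With $E$ the edge set of $H$: $S(H,\Phi)=\{\Phi(x_i,x_j):ij\in E\}$, $W(H,\Phi)=\mathbb{V}(S(H,\Phi))\subseteq\mathbb{C}^n$, $Z(H,\Phi)=W(H,\Phi)\cap\bigcup_{i>j}\mathbb{V}(x_i-x_j)$, and $U(H,\Phi)=\overline{W(H,\Phi)\setminus Z(H,\Phi)}$ (Zariski closure). *)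

(* Defs.v *)
(* The complex field C is modelled as R[i] = complex R for
   R : realType (MathComp-Analysis reals), i.e. C = R + iR with R the reals. *)
From HB Require Import structures.
From mathcomp Require Import all_boot all_order all_algebra.
From mathcomp Require Import polyXY.
From mathcomp Require Import mpoly.
From mathcomp Require Import complex.
From mathcomp Require Import reals.

Set Implicit Arguments.
Unset Strict Implicit.
Unset Printing Implicit Defensive.

Import Order.TTheory GRing.Theory Num.Theory.
Local Open Scope ring_scope.

Section Defs.
Variable F : fieldType.

(* A bivariate polynomial Phi(x,y) = \sum_i a_i(x) y^i is an element of
   {poly {poly F}}: outer variable y, coefficients a_i(x) in {poly F}. *)

Definition specX (Phi : {poly {poly F}}) (u : F) : {poly F} :=
  map_poly (fun a : {poly F} => a.[u]) Phi.

Definition evalXY (Phi : {poly {poly F}}) (u v : F) : F := (specX Phi u).[v].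

Definition symmetricXY (Phi : {poly {poly F}}) : Prop := swapXY Phi = Phi.

Definition partial_degree (Phi : {poly {poly F}}) (d : nat) : Prop :=
  size Phi = d.+1.

Definition squarefreeXY (Phi : {poly {poly F}}) : Prop :=
  forall g r : {poly {poly F}}, Phi = g * g * r -> g \is a GRing.unit.

Definition standard (Phi : {poly {poly F}}) : Prop :=
  [/\ squarefreeXY Phi,
      Phi.['X] != 0 (* Phi(x,x) is not identically zero *),
      (forall (a : {poly F}) (r : {poly {poly F}}),
          Phi = a%:P * r -> (size a <= 1)%N) (* no nonconstant factor in x only *)
    & (forall (b : {poly F}) (r : {poly {poly F}}),
          Phi = map_poly polyC b * r -> (size b <= 1)%N) (* nor in y only *)].

(* The graph G(Phi): vertex set F, u ~ v iff Phi(u,v) = 0. *)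
Definition adjXY (Phi : {poly {poly F}}) : rel F :=
  fun u v => evalXY Phi u v == 0.

Definition connXY (Phi : {poly {poly F}}) (u v : F) : Prop :=
  exists s : seq F, path (adjXY Phi) u s /\ last u s = v.

(* w is a loop, is incident to a multiple edge, or is defective *)
Definition singular_vertex (Phi : {poly {poly F}}) (w : F) : Prop :=
  [\/ evalXY Phi w w = 0,
      exists v : F, (('X - v%:P) ^+ 2 %| specX Phi w)
    | (lead_coef Phi).[w] = 0].

(* the component of u is not singular, i.e. it is a component of G(Phi)^* *)
Definition nonsingular_component (Phi : {poly {poly F}}) (u : F) : Prop :=
  forall w, connXY Phi u w -> ~ singular_vertex Phi w.

(* H (graph on [n] = 'I_n with edge relation e) is isomorphic to the
   component of u in G(Phi). *)
Definition iso_component n (e : rel 'I_n) (Phi : {poly {poly F}}) (u : F) : Prop :=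
  exists f : 'I_n -> F,
    [/\ injective f,
        (forall v, connXY Phi u v <-> exists i, f i = v)
      & (forall i j, e i j <-> evalXY Phi (f i) (f j) = 0)].

Definition has_component_iso n (e : rel 'I_n) (Phi : {poly {poly F}}) : Prop :=
  exists u : F, nonsingular_component Phi u /\ iso_component e Phi u.

Definition simple_graph n (e : rel 'I_n) : Prop :=
  (forall i j, e i j = e j i) /\ (forall i, ~~ e i i).
Definition connected_graph n (e : rel 'I_n) : Prop :=
  (0 < n)%N /\ forall i j, connect e i j.
Definition regular_graph n (e : rel 'I_n) (d : nat) : Prop :=
  forall i, #|[set j | e i j]| = d.

Definition W_HPhi n (e : rel 'I_n) (Phi : {poly {poly F}}) (x : 'I_n -> F) : Prop :=
  forall i j, e i j -> evalXY Phi (x i) (x j) = 0.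

Definition Z_HPhi n (e : rel 'I_n) (Phi : {poly {poly F}}) (x : 'I_n -> F) : Prop :=
  W_HPhi e Phi x /\ exists i j : 'I_n, (j < i)%N /\ x i = x j.

Definition zariski_closure n (S : ('I_n -> F) -> Prop) (x : 'I_n -> F) : Prop :=
  forall p : {mpoly F[n]}, (forall y, S y -> p.@[y] = 0) -> p.@[x] = 0.

Definition U_HPhi n (e : rel 'I_n) (Phi : {poly {poly F}}) : ('I_n -> F) -> Prop :=
  zariski_closure (fun x => W_HPhi e Phi x /\ ~ Z_HPhi e Phi x).

End Defs.

(* Main.v *)
Require Import Defs.
From HB Require Import structures.
From mathcomp Require Import all_boot all_order all_algebra.
From mathcomp Require Import polyXY mpoly complex reals.
From mathcomp Require Import zify.
From Stdlib Require Import Classical.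

Import GRing.Theory Num.Theory.
Local Open Scope ring_scope.

Lemma specX_neq0 {F : fieldType} (Phi : {poly {poly F}})
  (hst : forall (a : {poly F}) (r : {poly {poly F}}),
          Phi = a%:P * r -> (size a <= 1)%N) (w : F) : specX Phi w != 0.
Proof.
apply/negP => /eqP H0.
pose a : {poly F} := 'X - w%:P.
have Hr : forall k, root (Phi`_k) w.
  move=> k; rewrite /root.
  have := @coef_map_id0 _ _ (fun b : {poly F} => b.[w]) Phi k (horner0 w).
  rewrite -/(specX Phi w) H0 coef0 => <-; by [].
have := hst a (map_poly (fun c => c %/ a) Phi).
rewrite size_XsubC => H; have : (2 <= 1)%N; last by [].
apply: H; apply/polyP => k; rewrite coefCM coef_map_id0 ?div0p //.
by rewrite mulrC divpK // dvdp_XsubCl.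
Qed.

Lemma roots_exact {F : fieldType} (p : {poly F}) (rs : seq F) :
  p != 0 -> (size p <= (size rs).+1)%N -> all (root p) rs -> uniq rs ->
  forall v, root p v -> v \in rs.
Proof.
move=> p0 sp ar ur v rv; case: (boolP (v \in rs)) => // vn; exfalso.
have := max_poly_roots (rs := v :: rs) p0.
rewrite /= rv ar vn ur => /(_ isT isT) h; by rewrite ltnNge sp in h.
Qed.

Lemma no_double_root {F : fieldType} (p : {poly F}) (rs : seq F) :
  p != 0 -> (size p <= (size rs).+1)%N -> all (root p) rs -> uniq rs ->
  forall v, ~~ (('X - v%:P) ^+ 2 %| p).
Proof.
move=> p0 sp ar ur v; apply/negP => /dvdpP [q Hq].
pose p' := q * ('X - v%:P).
have Hp : p = p' * ('X - v%:P) by rewrite Hq /p' -mulrA expr2.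
have p'0 : p' != 0.
  by apply/eqP => H; move: p0; rewrite Hp H mul0r eqxx.
have ar' : all (root p') rs.
  apply/allP => r rr; have := allP ar r rr.
  rewrite /root Hp hornerM; case: (eqVneq r v) => [->|rv].
    by rewrite /p' hornerM hornerXsubC subrr !mulr0 eqxx.
  by rewrite mulf_eq0 hornerXsubC subr_eq0 (negPf rv) orbF.
have := max_poly_roots p'0 ar' ur.
move: sp; rewrite Hp size_mul ?polyXsubC_eq0 // size_XsubC addn2 /= ltnS => h1; by rewrite ltnNge h1.
Qed.

Arguments roots_exact {F p rs}.
Arguments no_double_root {F p rs}.

Theorem mainTheorem4 (R : realType) (n d : nat) (e : rel 'I_n)
    (Phi : {poly {poly R[i]}}) :
  simple_graph e -> connected_graph e -> regular_graph e d ->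
  symmetricXY Phi -> partial_degree Phi d -> standard Phi ->
  (has_component_iso e Phi <-> exists x : 'I_n -> R[i], U_HPhi e Phi x).
Proof.
move=> [esym eirr] [n0 econn] ereg _ Hsize [_ _ hx hy]; split.
  case=> u [_ [f [finj fconn fe]]]; exists f => p Hp; apply: Hp; split.
    by move=> i j eij; apply/fe.
  case=> _ [i [j [ji fij]]]; move: (finj _ _ fij) => ij; subst.
  by rewrite ltnn in ji.
case=> x0 Hx.
have [y [Wy nZy]] : exists y, W_HPhi e Phi y /\ ~ Z_HPhi e Phi y.
  apply: NNPP => Hn.
  have := Hx 1 (fun y Sy => ltac:(exfalso; apply: Hn; exists y; exact Sy)).
  by rewrite meval1 => /eqP; rewrite oner_eq0.
have yinj : injective y.
  move=> i j yij; case: (ltngtP i j) => h.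
  - by exfalso; apply: nZy; split => //; exists j, i.
  - by exfalso; apply: nZy; split => //; exists i, j.
  - exact: val_inj.
pose nb i := [seq y j | j <- enum [set j | e i j]].
have Hnb i : [/\ uniq (nb i), size (nb i) = d
              & all (root (specX Phi (y i))) (nb i)].
  split.
  - by rewrite map_inj_uniq ?enum_uniq.
  - by rewrite size_map -cardE ereg.
  - apply/allP => v /mapP [j]; rewrite mem_enum inE => eij ->.
    by apply/eqP; exact: Wy.
have p0 i : specX Phi (y i) != 0 := @specX_neq0 _ Phi hx _.
have sp i : (size (specX Phi (y i)) <= (size (nb i)).+1)%N.
  case: (Hnb i) => _ -> _; rewrite -Hsize /specX /map_poly; exact: size_poly.
have key i v : evalXY Phi (y i) v = 0 <-> exists j, e i j /\ y j = v.
  split.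
    move=> /eqP rv; case: (Hnb i) => u _ a.
    have := roots_exact (p0 i) (sp i) a u v rv.
    by case/mapP => j; rewrite mem_enum inE => eij ->; exists j.
  by case=> j [eij <-]; exact: Wy.
have nsing i : ~ singular_vertex Phi (y i).
  case.
  - move/key => [j [eij /yinj ji]]; subst j.
    by rewrite (negPf (eirr i)) in eij.
  - case=> v; apply/negP; case: (Hnb i) => u _ a.
    exact: (no_double_root (p0 i) (sp i) a u v).
  - move=> H; case: (Hnb i) => u sz a.
    have s1 := max_poly_roots (p0 i) a u; rewrite sz in s1.
    have s2 := sp i; rewrite sz in s2.
    have sz' : size (specX Phi (y i)) = d.+1.
      by apply/eqP; rewrite eqn_leq s2 s1.
    have : lead_coef (specX Phi (y i)) == 0.
      rewrite /lead_coef sz' -/(d.+1.-1) /specX coef_map_id0 ?horner0 //.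
      move: H; rewrite /lead_coef Hsize => H; exact/eqP.
    by rewrite lead_coef_eq0 (negPf (p0 i)).
pose i0 := Ordinal n0.
have conn_gen : forall k s, path (adjXY Phi) (y k) s ->
    exists j, y j = last (y k) s.
  move=> k s; elim: s k => [|a s IH] k /=; first by exists k.
  case/andP => /eqP /key [j [_ <-]] ps; exact: IH ps.
have conn_to v : connXY Phi (y i0) v -> exists i, y i = v.
  by case=> s [ps <-]; exact: conn_gen.
exists (y i0); split.
  by move=> w /conn_to [i <-]; exact: nsing.
exists y; split => //.
  move=> v; split; first exact: conn_to.
  case=> i <-; have /connectP [s ps ->] := econn i0 i.
  exists (map y s); split; last by rewrite last_map.
  elim: s (i0) ps => //= a s IH k /andP [eka ps].
  apply/andP; split; [apply/eqP; exact: Wy | exact: IH].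
move=> i j; split; first exact: Wy.
by move/key => [k [eik ykj]]; rewrite -(yinj _ _ ykj).
Qed.
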